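(* Let $X\in\mathbb R^{n\times p}$ and $\mathbf y\in\mathbb R^n$ be given, and suppose the coding complexity $c(\cdot)$ is sub-additive. Let $\bar\beta\in\mathbb R^p$ and let $\bar B_1,\ldots,\bar B_b\in\mathcal B$ be blocks with $\mathrm{supp}(\bar\beta)\subset\bar F=\bigcup_{j=1}^b\bar B_j$. Put $c(\bar\beta,\mathcal B)=\sum_{j=1}^b c(\bar B_j)$ and $\rho_0=\max_j\rho_+(\bar B_j)$. Let $F\subset\mathcal I$ satisfy $c(\bar B_j\cup F)\ge c(F)$ for all $j$, let \[ \beta=\arg\min_{\beta'\in\mathbb R^p}\|X\beta'-\mathbf y\|_2^2\quad\text{subject to}\quad\mathrm{supp}(\beta')\subset F, \] and suppose $\|X\beta-\mathbf y\|_2^2\ge\|X\bar\beta-\mathbf y\|_2^2$. Then \[ \max_j\phi(\bar B_j)\ge\frac{\rho_-(F\cup\bar F)}{\rho_0\,c(\bar\beta,\mathcal B)}\left[\|X\beta-\mathbf y\|_2^2-\|X\bar\beta-\mathbf y\|_2^2\right], \] where $\phi(B)=\dfrac{\|P_{B-F}(X\beta-\mathbf y)\|_2^2}{c(B\cup F)-c(F)}$.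
   Context: $\mathcal I=\{1,\ldots,p\}$; $\mathcal B$ is a collection of subsets of $\mathcal I$; $\mathrm{supp}(\beta)=\{j:\beta_j\ne0\}$. A function $\mathrm{cl}$ from subsets of $\mathcal I$ to $[0,\infty]$ is a coding length if $\sum_{F\subset\mathcal I,F\ne\emptyset}2^{-\mathrm{cl}(F)}\le1$, with $\mathrm{cl}(\emptyset)=0$; coding complexity $c(F)=|F|+\mathrm{cl}(F)$; sub-additive means $c(F\cup F')\le c(F)+c(F')$ for all $F,F'$. For $F\subset\mathcal I$: $\rho_-(F)=\inf\{\frac1n\|X\beta\|_2^2/\|\beta\|_2^2:\beta\ne0,\mathrm{supp}(\beta)\subset F\}$ and $\rho_+(F)$ the corresponding supremum. $P_F=X_F(X_F^\top X_F)^{-1}X_F^\top$ denotes the orthogonal projection onto the span of the columns of $X$ indexed by $F$, and $B-F$ denotes set difference. *)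

(* Defs.v *)
From HB Require Import structures.
From mathcomp Require Import all_boot all_order all_algebra.
From mathcomp Require Import all_classical all_reals all_analysis.
Set Implicit Arguments. Unset Strict Implicit. Unset Printing Implicit Defensive.
Import Order.TTheory GRing.Theory Num.Theory.
Local Open Scope ring_scope.
Local Open Scope classical_set_scope.

Section Defs.
Context {R : realType}.

Definition sqnorm {n : nat} (v : 'cV[R]_n) : R := \sum_i v i 0 ^+ 2.
Definition dotv {n : nat} (v w : 'cV[R]_n) : R := \sum_i v i 0 * w i 0.

Definition suppv {p : nat} (b : 'cV[R]_p) : {set 'I_p} := [set j | b j 0 != 0].

(* rho_-(S) = inf { (1/n)||X b||^2 / ||b||^2 : b <> 0, suppv b in S }  (inf of empty = +oo) *)
Definition rho_minus {n p : nat} (X : 'M[R]_(n, p)) (S : {set 'I_p}) : \bar R :=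
  ereal_inf [set ((n%:R)^-1 * sqnorm (X *m b) / sqnorm b)%:E
            | b in [set b : 'cV[R]_p | b != 0 /\ suppv b \subset S]].

(* rho_+(S) = sup of the same quantities (sup of empty = -oo) *)
Definition rho_plus {n p : nat} (X : 'M[R]_(n, p)) (S : {set 'I_p}) : \bar R :=
  ereal_sup [set ((n%:R)^-1 * sqnorm (X *m b) / sqnorm b)%:E
            | b in [set b : 'cV[R]_p | b != 0 /\ suppv b \subset S]].

Definition is_orth_proj {n p : nat} (X : 'M[R]_(n, p)) (S : {set 'I_p})
    (v w : 'cV[R]_n) : Prop :=
  (exists u : 'cV[R]_p, suppv u \subset S /\ w = X *m u) /\
  (forall u : 'cV[R]_p, suppv u \subset S -> dotv (v - w) (X *m u) = 0).

Definition orth_proj {n p : nat} (X : 'M[R]_(n, p)) (S : {set 'I_p})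
    (v : 'cV[R]_n) : 'cV[R]_n :=
  xget 0 [set w | is_orth_proj X S v w].

Definition pow2neg (x : \bar R) : R := if x is r%:E then 2 `^ (- r) else 0.

Definition coding_length {p : nat} (cl : {set 'I_p} -> \bar R) : Prop :=
  [/\ cl finset.set0 = 0%E, (forall S, (0 <= cl S)%E) &
      \sum_(S : {set 'I_p} | S != finset.set0) pow2neg (cl S) <= 1].

Definition ccomplex {p : nat} (cl : {set 'I_p} -> \bar R) (S : {set 'I_p}) : \bar R :=
  ((#|S|%:R)%:E + cl S)%E.

Definition cc_subadditive {p : nat} (cl : {set 'I_p} -> \bar R) : Prop :=
  forall S S' : {set 'I_p},
    (ccomplex cl (S :|: S') <= ccomplex cl S + ccomplex cl S')%E.

(* phi_blk(B) = ||P_{B - F} r||^2 / (c(B u F) - c(F)), computed in \bar R with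
   x / 0 = +oo for x > 0 and 0 / 0 = 0 (MathComp's inve / mule conventions) *)
Definition phi_blk {n p : nat} (X : 'M[R]_(n, p)) (cl : {set 'I_p} -> \bar R)
    (F : {set 'I_p}) (r : 'cV[R]_n) (B : {set 'I_p}) : \bar R :=
  ((sqnorm (orth_proj X (B :\: F) r))%:E *
   (ccomplex cl (B :|: F) - ccomplex cl F)^-1)%E.

End Defs.

(* Main.v *)
Require Import Defs.
From HB Require Import structures.
From mathcomp Require Import all_boot all_order all_algebra.
From mathcomp Require Import all_classical all_reals all_analysis.
From mathcomp Require Import ring lra.
Import Order.TTheory GRing.Theory Num.Theory.
Local Open Scope ring_scope.


Section Aux.
Context {R : realType}.

Lemma sqnormE {n} (v : 'cV[R]_n) : sqnorm v = dotv v v.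
Proof. by apply: eq_bigr => i _; rewrite expr2. Qed.
Lemma dotvC {n} (v w : 'cV[R]_n) : dotv v w = dotv w v.
Proof. by apply: eq_bigr => i _; rewrite mulrC. Qed.
Lemma dotvDl {n} (u v w : 'cV[R]_n) : dotv (u + v) w = dotv u w + dotv v w.
Proof. by rewrite /dotv -big_split; apply: eq_bigr => i _; rewrite mxE mulrDl. Qed.
Lemma dotvNl {n} (u w : 'cV[R]_n) : dotv (- u) w = - dotv u w.
Proof. by rewrite /dotv -sumrN; apply: eq_bigr => i _; rewrite mxE mulNr. Qed.
Lemma dotvZl {n} a (u w : 'cV[R]_n) : dotv (a *: u) w = a * dotv u w.
Proof. by rewrite /dotv mulr_sumr; apply: eq_bigr => i _; rewrite mxE mulrA. Qed.
Lemma dotvBl {n} (u v w : 'cV[R]_n) : dotv (u - v) w = dotv u w - dotv v w.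
Proof. by rewrite dotvDl dotvNl. Qed.
Lemma dotvDr {n} (u v w : 'cV[R]_n) : dotv w (u + v) = dotv w u + dotv w v.
Proof. by rewrite !(dotvC w) dotvDl. Qed.
Lemma dotvNr {n} (u w : 'cV[R]_n) : dotv w (- u) = - dotv w u.
Proof. by rewrite !(dotvC w) dotvNl. Qed.
Lemma dotvBr {n} (u v w : 'cV[R]_n) : dotv w (u - v) = dotv w u - dotv w v.
Proof. by rewrite dotvDr dotvNr. Qed.
Lemma dotvZr {n} a (u w : 'cV[R]_n) : dotv w (a *: u) = a * dotv w u.
Proof. by rewrite !(dotvC w) dotvZl. Qed.
Lemma dotv0r {n} (u : 'cV[R]_n) : dotv u 0 = 0.
Proof. by apply: big1 => i _; rewrite mxE mulr0. Qed.
Lemma dotv_sumr {n} (I : Type) (r : seq I) (P : pred I) (F : I -> 'cV[R]_n) u :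
  dotv u (\sum_(i <- r | P i) F i) = \sum_(i <- r | P i) dotv u (F i).
Proof.
apply: (big_ind2 (fun x y => dotv u x = y)); first exact: dotv0r.
  by move=> x1 x2 y1 y2 <- <-; rewrite dotvDr.
by [].
Qed.
Lemma sqnorm_ge0 {n} (v : 'cV[R]_n) : 0 <= sqnorm v.
Proof. by apply: sumr_ge0 => i _; apply: sqr_ge0. Qed.
Lemma sqnorm_eq0 {n} (v : 'cV[R]_n) : sqnorm v = 0 -> v = 0.
Proof.
move=> /psumr_eq0P H; apply/matrixP => i j; rewrite ord1 mxE.
by apply/eqP; rewrite -sqrf_eq0; apply/eqP; apply: H => // k _; apply: sqr_ge0.
Qed.

Lemma quad (a b c : R) : 0 <= c -> (forall t, 0 <= a + 2 * t * b + t ^+ 2 * c) ->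
  b ^+ 2 <= a * c.
Proof.
move=> c0 H; have [c0'|cgt0] := eqVneq c 0.
  rewrite c0' mulr0; have [->|bn0] := eqVneq b 0; first by rewrite expr0n.
  have := H (- (a + 1) / (2 * b)); rewrite c0' mulr0 addr0.
  have -> : 2 * (- (a + 1) / (2 * b)) * b = - (a + 1).
    by field.
  lra.
have cp : 0 < c by rewrite lt0r cgt0.
have := H (- b / c).
have -> : a + 2 * (- b / c) * b + (- b / c) ^+ 2 * c = a - b ^+ 2 / c.
  by field.
rewrite subr_ge0 ler_pdivrMr //.
Qed.

Lemma CS {n} (u w : 'cV[R]_n) : dotv u w ^+ 2 <= dotv u u * dotv w w.
Proof.
apply: quad; first by rewrite -sqnormE sqnorm_ge0.
move=> t; have := sqnorm_ge0 (u + t *: w).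
rewrite sqnormE !dotvDl !dotvDr !dotvZl !dotvZr (dotvC w u).
lra.
Qed.

Lemma dot_zero {n} (e z : 'cV[R]_n) : dotv e e = 0 -> dotv e z = 0.
Proof.
move=> H; have := CS e z; rewrite H mul0r => h.
by apply/eqP; rewrite -sqrf_eq0 eq_le h sqr_ge0.
Qed.

Lemma suppvP p (u : 'cV[R]_p) (S : {set 'I_p}) :
  reflect (forall k, k \notin S -> u k 0 = 0) (suppv u \subset S).
Proof.
apply: (iffP idP) => [/fintype.subsetP H k kS|H].
  by apply/eqP; apply: contraNT kS => nz; apply: H; rewrite inE.
apply/fintype.subsetP => k; rewrite inE => nz; apply: contraR nz => kS; by rewrite H.
Qed.

Lemma sqnorm0 {n} : sqnorm (0 : 'cV[R]_n) = 0.
Proof. by apply: big1 => i _; rewrite mxE expr0n. Qed.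

Lemma sqr_le0 (x : R) : x ^+ 2 <= 0 -> x = 0.
Proof. by move=> h; apply/eqP; rewrite -sqrf_eq0 eq_le h sqr_ge0. Qed.

End Aux.


Section Proj.
Context {R : realType}.

Definition ecol {p} (i : 'I_p) : 'cV[R]_p := \col_k (k == i)%:R.

Lemma proj_set0 n p (X : 'M[R]_(n,p)) v : is_orth_proj X finset.set0 v 0.
Proof.
split.
  exists 0; split; [apply/suppvP => k _; by rewrite mxE | by rewrite mulmx0].
move=> u /suppvP Hu.
have -> : u = 0 by apply/matrixP => k l; rewrite ord1 mxE Hu ?inE.
by rewrite mulmx0 dotv0r.
Qed.

Lemma proj_add n p (X : 'M[R]_(n,p)) T i :
  (forall v, exists w, is_orth_proj X T v w) ->
  forall v, exists w, is_orth_proj X (i |: T) v w.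
Proof.
move=> HT v.
have [Q [[ux [Sux Qe]] Qo]] := HT (X *m ecol i).
have [Pv [[uv [Suv Pe]] Po]] := HT v.
set e := X *m ecol i - Q.
set c := dotv v e / dotv e e.
exists (Pv + c *: e); split.
  exists (uv + c *: (ecol i - ux)); split.
    have /suppvP Suv' := Suv; have /suppvP Sux' := Sux.
    apply/suppvP => k; rewrite !inE negb_or => /andP[ki kT].
    by rewrite !mxE Suv' // Sux' // (negbTE ki) subr0 mulr0 addr0.
  by rewrite mulmxDr Pe /e Qe -scalemxAr mulmxBr.
move=> u /suppvP Hu.
pose u1 := \col_k (if k \in T then u k 0 else 0).
have Hu1 : suppv u1 \subset T.
  by apply/suppvP => k kT; rewrite mxE (negbTE kT).
have Hd : u = u1 + (u i 0 - u1 i 0) *: ecol i.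
  apply/matrixP => k l; rewrite ord1 !mxE.
  case: (eqVneq k i) => [->|ki]; first by rewrite mulr1 addrC subrK.
  rewrite mulr0 addr0; case: ifP => // kT.
  by rewrite Hu // !inE negb_or ki kT.
have h1 : dotv v (X *m u1) = dotv Pv (X *m u1).
  by apply/eqP; rewrite -subr_eq0 -dotvBl; apply/eqP; apply: Po.
have h2 : dotv e (X *m u1) = 0 by apply: Qo.
have h3 : dotv Pv e = 0 by rewrite dotvC Pe; apply: Qo.
have h4 : dotv v Q = dotv Pv Q.
  by apply/eqP; rewrite -subr_eq0 -dotvBl; apply/eqP; rewrite Qe; apply: Po.
have h5 : dotv e Q = 0 by rewrite Qe; apply: Qo.
have hc : c * dotv e e = dotv v e.
  have [ee0|een0] := eqVneq (dotv e e) 0.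
    by rewrite ee0 mulr0 dotvC dot_zero.
  by rewrite /c divfK.
have hX : X *m ecol i = e + Q by rewrite /e subrK.
rewrite Hd mulmxDr -scalemxAr dotvDr dotvZr hX.
clearbody c; clearbody e.
rewrite !dotvBl !dotvDl !dotvZl !dotvDr h1 h2 h3 h4 h5 -hc.
ring.
Qed.


Lemma proj_ex n p (X : 'M[R]_(n,p)) (S : {set 'I_p}) v :
  exists w, is_orth_proj X S v w.
Proof.
move: v; have [N] := ubnP #|S|; elim: N S => // N IH S hS.
case: (set_0Vmem S) => [->|[i iS]] v; first by exists 0; apply: proj_set0.
rewrite -(finset.setD1K iS); apply: proj_add => w; apply: IH.
by move: hS; rewrite (cardsD1 i S) iS.
Qed.

Lemma orth_projP n p (X : 'M[R]_(n,p)) (S : {set 'I_p}) v :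
  is_orth_proj X S v (orth_proj X S v).
Proof. exact: (xgetPex 0 (proj_ex _ _ X S v)). Qed.

Lemma proj_bound n p (X : 'M[R]_(n,p)) (S : {set 'I_p}) r u :
  suppv u \subset S ->
  dotv r (X *m u) ^+ 2 <= sqnorm (orth_proj X S r) * sqnorm (X *m u).
Proof.
move=> Su; have [_ Ho] := orth_projP _ _ X S r.
have -> : dotv r (X *m u) = dotv (orth_proj X S r) (X *m u).
  by apply/eqP; rewrite -subr_eq0 -dotvBl; apply/eqP; apply: Ho.
by rewrite !sqnormE; apply: CS.
Qed.

End Proj.


Section Core.
Context {R : realType}.

Lemma quad_term (x a c t : R) : 0 <= a -> 0 <= c -> x ^+ 2 <= a * c ->
  0 <= c - 2 * t * x + t ^+ 2 * a.
Proof.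
move=> a0 c0 h.
have [a0'|an0] := eqVneq a 0.
  rewrite a0' mul0r in h; move: h => h'; rewrite a0'; have x0 : x = 0 by apply/eqP; rewrite -sqrf_eq0 eq_le h' sqr_ge0.
  rewrite x0; lra.
have ap : 0 < a by rewrite lt0r an0.
rewrite -(pmulr_rge0 _ ap).
have -> : a * (c - 2 * t * x + t ^+ 2 * a) = (t * a - x) ^+ 2 + (a * c - x ^+ 2) by ring.
by rewrite addr_ge0 ?sqr_ge0 ?subr_ge0.
Qed.

Lemma sumCS b (x a c : 'I_b -> R) : (forall j, 0 <= a j) -> (forall j, 0 <= c j) ->
  (forall j, x j ^+ 2 <= a j * c j) ->
  (\sum_j x j) ^+ 2 <= (\sum_j a j) * (\sum_j c j).
Proof.
move=> a0 c0 h.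
rewrite mulrC -sqrrN; apply: quad; first by apply: sumr_ge0.
move=> t.
have -> : \sum_j c j + 2 * t * - (\sum_j x j) + t ^+ 2 * \sum_j a j =
  \sum_j (c j - 2 * t * x j + t ^+ 2 * a j).
  by rewrite !big_split /= -!mulr_sumr sumrN -mulr_sumr mulrN.
by apply: sumr_ge0 => j _; apply: quad_term.
Qed.

Lemma opt_orth n p (X : 'M[R]_(n, p)) (y : 'cV[R]_n) (beta : 'cV[R]_p) (F : {set 'I_p}) :
  suppv beta \subset F ->
  (forall b', suppv b' \subset F -> sqnorm (X *m beta - y) <= sqnorm (X *m b' - y)) ->
  forall v, suppv v \subset F -> dotv (X *m beta - y) (X *m v) = 0.
Proof.
move=> /suppvP Sb Hopt v /suppvP Sv.
set r := X *m beta - y.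
have key : forall t, 0 <= 0 + 2 * t * dotv r (X *m v) + t ^+ 2 * dotv (X *m v) (X *m v).
  move=> t; have := Hopt (beta + t *: v).
  have -> : X *m (beta + t *: v) - y = r + t *: (X *m v).
    by rewrite mulmxDr -scalemxAr addrAC.
  have Sbv : suppv (beta + t *: v) \subset F.
    by apply/suppvP => k kF; rewrite !mxE Sb // Sv // mulr0 addr0.
  move=> /(_ Sbv); rewrite -/r; clearbody r.
  rewrite !sqnormE !dotvDl !dotvDr !dotvZl !dotvZr (dotvC (X *m v) r).
  move=> H; rewrite expr2; nra.
have c0 : 0 <= dotv (X *m v) (X *m v) by rewrite -sqnormE sqnorm_ge0.
have := quad _ _ _ c0 key; rewrite mul0r => h.
by apply/eqP; rewrite -sqrf_eq0 eq_le h sqr_ge0.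
Qed.


End Core.


Section Decomp.
Context {R : realType}.

Definition restr {p} (S : {set 'I_p}) (v : 'cV[R]_p) : 'cV[R]_p :=
  \col_k (if k \in S then v k 0 else 0).

Lemma restr_supp p (S : {set 'I_p}) v : suppv (restr S v) \subset S.
Proof. by apply/suppvP => k kS; rewrite mxE (negbTE kS). Qed.

Lemma restr_subset p (S T : {set 'I_p}) v : S \subset T -> suppv (restr S v) \subset T.
Proof.
move=> ST; apply/suppvP => k kT; rewrite mxE; case: ifP => // kS.
by move/fintype.subsetP: ST => /(_ k kS); rewrite (negbTE kT).
Qed.

Variables (p b : nat) (Bb : 'I_b -> {set 'I_p}) (F : {set 'I_p}).

Definition Gset (j : 'I_b) : {set 'I_p} :=
  [set i | (i \in Bb j) && (i \notin F) && [forall k : 'I_b, (k < j)%N ==> (i \notin Bb k)]].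

Lemma G_sub j : Gset j \subset Bb j :\: F.
Proof.
apply/fintype.subsetP => i; rewrite !inE => /andP[/andP[h1 h2] _].
by rewrite h1 h2.
Qed.

Lemma G_disj j k i : j != k -> i \in Gset j -> i \notin Gset k.
Proof.
rewrite !inE => jk /andP[/andP[ij iF] /forallP hj].
apply/negP => /andP[/andP[ik _] /forallP hk].
have [lt|gt] : (j < k)%N \/ (k < j)%N.
  case: (ltngtP j k) => [?|?|e]; [by left|by right|]; by move: jk; rewrite (ord_inj e) eqxx.
  by have := hk j; rewrite lt ij.
by have := hj k; rewrite gt ik.
Qed.

Lemma G_cover i : i \notin F -> i \in (\bigcup_(j < b) Bb j)%SET -> exists j, i \in Gset j.
Proof.
move=> iF /bigcupP[j0 _ ij0].
case: (@arg_minnP _ j0 (fun j => i \in Bb j) (fun j : 'I_b => val j) ij0) => k ik kmin.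
exists k; rewrite !inE ik iF /=; apply/forallP => l; apply/implyP => lk.
by apply/negP => il; have := kmin l il; rewrite leqNgt lk.
Qed.

Lemma G_sum (x : R) i : \sum_j (if i \in Gset j then x else 0) =
  if (i \notin F) && (i \in (\bigcup_(j < b) Bb j)%SET) then x else 0.
Proof.
case: ifP => [/andP[iF iU]|h].
  have [j ij] := @G_cover i iF iU.
  rewrite (bigD1 j) //= ij big1 ?addr0 // => k kj.
  by rewrite (negbTE (@G_disj j k i _ ij)) // eq_sym.
apply: big1 => j _; case: ifP => // ij.
move: h; have := fintype.subsetP (G_sub j) i ij; rewrite !inE => /andP[-> ijB] /=.
by rewrite (_ : i \in _) //; apply/bigcupP; exists j.
Qed.

Lemma decomp (v : 'cV[R]_p) :
  (forall k, k \notin F -> k \notin (\bigcup_(j < b) Bb j)%SET -> v k 0 = 0) ->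
  v = restr F v + \sum_j restr (Gset j) v.
Proof.
move=> hv; apply/matrixP => k l; rewrite ord1 !mxE summxE.
under eq_bigr do rewrite mxE.
rewrite G_sum; case: ifP => kF /=; first by rewrite addr0.
case: ifP => kU; first by rewrite add0r.
by rewrite addr0 hv // ?kF ?kU.
Qed.

Lemma decomp_norm (v : 'cV[R]_p) : \sum_j sqnorm (restr (Gset j) v) <= sqnorm v.
Proof.
rewrite /sqnorm exchange_big /=; apply: ler_sum => k _.
under eq_bigr do rewrite mxE (fun_if (fun x => x ^+ 2)) expr0n /=.
rewrite G_sum; case: ifP => _ //; exact: sqr_ge0.
Qed.

End Decomp.


Theorem lemma8 (R : realType) (n p : nat) (X : 'M[R]_(n, p)) (y : 'cV[R]_n)
    (cl : {set 'I_p} -> \bar R) (Bcal : {set {set 'I_p}})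
    (b : nat) (Bbar : 'I_b -> {set 'I_p}) (betabar : 'cV[R]_p)
    (F : {set 'I_p}) (beta : 'cV[R]_p) :
  coding_length cl ->
  cc_subadditive cl ->
  (0 < b)%N ->
  (forall j, Bbar j \in Bcal) ->
  suppv betabar \subset (\bigcup_(j < b) Bbar j)%SET ->
  ccomplex cl F \is a fin_num ->
  (forall j, ccomplex cl F <= ccomplex cl (Bbar j :|: F))%E ->
  suppv beta \subset F ->
  (forall beta' : 'cV[R]_p, suppv beta' \subset F ->
     sqnorm (X *m beta - y) <= sqnorm (X *m beta' - y)) ->
  sqnorm (X *m beta - y) >= sqnorm (X *m betabar - y) ->
  (rho_minus X (F :|: (\bigcup_(j < b) Bbar j)%SET)
     * ((\big[maxe/-oo]_(j < b) rho_plus X (Bbar j))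
        * (\sum_(j < b) ccomplex cl (Bbar j)))^-1
     * (sqnorm (X *m beta - y) - sqnorm (X *m betabar - y))%:E
   <= \big[maxe/-oo]_(j < b) phi_blk X cl F (X *m beta - y) (Bbar j))%E.
Proof.
move=> [cl0 clge0 _] subadd hb _ Sbb cFfin cBF Sb Hopt Hge.
set r := X *m beta - y.
set Fb := (\bigcup_(j < b) Bbar j)%SET.
set m := rho_minus X (F :|: Fb).
set M := (X in (_ * (X * _)^-1)%E).
set S := (X in (_ * (_ * X)^-1)%E).
set P := (X in (_ <= X)%E).
set Dl := sqnorm r - sqnorm (X *m betabar - y).
have phi_ge0 j : (0 <= phi_blk X cl F r (Bbar j))%E.
  rewrite /phi_blk; apply: mule_ge0; first by rewrite lee_fin sqnorm_ge0.
  by rewrite inve_ge0 suber_ge0 // cBF.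
pose j0 : 'I_b := Ordinal hb.
have P0 : (0 <= P)%E.
  apply: le_trans (phi_ge0 j0) _. exact: (le_bigmax (-oo)%E (fun j => phi_blk X cl F r (Bbar j)) j0).
have Dlge0 : 0 <= Dl by rewrite subr_ge0.
have [Dl0|Dln0] := eqVneq Dl 0; first by rewrite Dl0 mule0.
have Dlpos : 0 < Dl by rewrite lt0r Dln0.
have [->|Pnoo] := eqVneq P +oo%E; first by rewrite leey.
have Pfin : P \is a fin_num by rewrite ge0_fin_numE // ltey.
set phi := fine P.
have Pe : P = phi%:E by rewrite fineK.
have phi0 : 0 <= phi by rewrite -lee_fin -Pe.
set D := betabar - beta.
pose u j := restr (Gset _ _ Bbar F j) D.
pose aj j := dotv r (X *m u j).
set t := sqnorm (X *m D).
set a := dotv r (X *m D).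
have /suppvP Sb' := Sb.
have /suppvP Sbb' := Sbb.
have hDl : Dl = - 2 * a - t.
  rewrite /Dl; have -> : X *m betabar - y = r + X *m D.
    by rewrite /r /D mulmxBr; apply/matrixP => i k; rewrite !mxE; ring.
  rewrite /t /a; clearbody r; rewrite !sqnormE !dotvDl !dotvDr (dotvC (X *m D) r); ring.
have ha : a = \sum_j aj j.
  rewrite /a (@decomp _ _ _ Bbar F D); last first.
    move=> k kF kU; rewrite !mxE Sb' // Sbb' // subr0 //.
  rewrite mulmxDr dotvDr (opt_orth _ _ _ _ _ _ Sb Hopt) ?restr_supp // add0r.
  by rewrite mulmx_sumr dotv_sumr.
have t0 : 0 <= t by apply: sqnorm_ge0.
have an0 : a != 0.
  by apply/eqP => a0; move: Dlpos; rewrite hDl a0 mulr0 sub0r oppr_gt0 ltNge t0.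
have [j1 aj1] : exists j, aj j != 0.
  case: (pickP (fun j => aj j != 0)) => [j1 h|h0]; first by exists j1.
  by move: an0; rewrite ha big1 ?eqxx // => j _; move: (h0 j) => /negbFE/eqP.
have n0 : (0 < n)%N.
  rewrite lt0n; apply/eqP => n0; move/eqP: aj1; apply.
  by rewrite /aj /dotv; apply: big1 => i _; have := ltn_ord i; rewrite {2}n0.
have npos : 0 < n%:R :> R by rewrite ltr0n.
have sXu1 : 0 < sqnorm (X *m u j1).
  rewrite lt0r sqnorm_ge0 andbT; apply/eqP => h.
  move/eqP: aj1; apply; apply: sqr_le0.
  by have := CS r (X *m u j1); rewrite -!sqnormE h mulr0.
have su1 : 0 < sqnorm (u j1).
  rewrite lt0r sqnorm_ge0 andbT; apply/eqP => h.
  by move: sXu1; rewrite (sqnorm_eq0 _ h) mulmx0 sqnorm0 ltxx.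
have sD : 0 < sqnorm D.
  rewrite lt0r sqnorm_ge0 andbT; apply/eqP => h.
  by move: an0; rewrite /a (sqnorm_eq0 _ h) mulmx0 dotv0r eqxx.
pose ratio (v : 'cV[R]_p) := n%:R^-1 * sqnorm (X *m v) / sqnorm v.
have hrp : forall j v, v != 0 -> suppv v \subset Bbar j -> ((ratio v)%:E <= M)%E.
  move=> j v vn0 sv.
  apply: le_trans (le_bigmax (-oo)%E (fun j => rho_plus X (Bbar j)) j).
  by apply: ereal_sup_ubound; exists v.
have hu j : suppv (u j) \subset Bbar j :\: F.
  exact: restr_subset (G_sub _ _ _ _ j).
have hu' j : suppv (u j) \subset Bbar j.
  exact: fintype.subset_trans (hu j) (subsetDl _ _).
have u1n0 : u j1 != 0 by apply/eqP => h; move: su1; rewrite h sqnorm0 ltxx.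
have rpos : 0 < ratio (u j1) by rewrite /ratio divr_gt0 // mulr_gt0 // invr_gt0.
have Mpos : (0 < M)%E.
  by apply: lt_le_trans (hrp j1 (u j1) u1n0 (hu' j1)); rewrite lte_fin.
have [k hk] : exists k, u j1 k 0 != 0.
  case: (pickP (fun k => u j1 k 0 != 0)) => [k hk|h0]; first by exists k.
  move: u1n0; rewrite (_ : u j1 = 0) ?eqxx //.
  by apply/matrixP => i l; rewrite ord1 [RHS]mxE; apply/eqP/negbFE/h0.
have kB : k \in Bbar j1.
  by apply: contraR hk => kn; apply/eqP; move/suppvP: (hu' j1); apply.
have c_ge0 (T : {set 'I_p}) : (0 <= ccomplex cl T)%E.
  by rewrite /ccomplex adde_ge0 // lee_fin ler0n.
have cB1 : (1 <= ccomplex cl (Bbar j1))%E.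
  rewrite /ccomplex; apply: lee_paddr (clge0 _) _.
  by rewrite lee_fin ler1n; apply/card_gt0P; exists k.
have cBS j : (ccomplex cl (Bbar j) <= S)%E.
  rewrite /S (bigD1 j) //=; apply: lee_paddr (le_refl _).
  by apply: sume_ge0 => i _.
have S1 : (1 <= S)%E := le_trans cB1 (cBS j1).
have Spos : (0 < S)%E := lt_le_trans lte01 S1.
have [MSoo|MSnoo] := eqVneq (M * S)%E +oo%E.
  by rewrite MSoo invey mule0 mul0e.
have Mfin : M \is a fin_num.
  rewrite ge0_fin_numE ?ltW // ltey; apply: contra MSnoo => /eqP ->.
  by rewrite gt0_mulye.
have Sfin : S \is a fin_num.
  rewrite ge0_fin_numE ?ltW // ltey; apply: contra MSnoo => /eqP ->.
  by rewrite gt0_muley.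
set mu := fine M; set sig := fine S.
have Me : M = mu%:E by rewrite fineK.
have Se : S = sig%:E by rewrite fineK.
have mupos : 0 < mu by rewrite -lte_fin -Me.
have sig1 : 1 <= sig by rewrite -lee_fin -Se.
have cBfin j : ccomplex cl (Bbar j) \is a fin_num.
  by rewrite ge0_fin_numE // (le_lt_trans (cBS j)) // Se ltry.
have cBFfin j : ccomplex cl (Bbar j :|: F) \is a fin_num.
  rewrite ge0_fin_numE //; apply: le_lt_trans (subadd _ _) _.
  by apply: lte_add_pinfty; rewrite -ge0_fin_numE.
pose w j := fine (ccomplex cl (Bbar j :|: F)) - fine (ccomplex cl F).
have hwe j : (ccomplex cl (Bbar j :|: F) - ccomplex cl F)%E = (w j)%:E.
  by rewrite EFinB !fineK.
have hw0 j : 0 <= w j by rewrite subr_ge0 fine_le.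
have hwc j : w j <= fine (ccomplex cl (Bbar j)).
  rewrite lerBlDr -fineD //; apply: fine_le; try by [].
  by rewrite fin_numD; apply/andP; split.
have hW : \sum_j w j <= sig.
  rewrite /sig /S -sum_fine //; exact: ler_sum.
pose q j := sqnorm (orth_proj X (Bbar j :\: F) r).
have hq j : q j <= phi * w j.
  have h : (phi_blk X cl F r (Bbar j) <= phi%:E)%E.
    by rewrite -Pe; exact: (le_bigmax (-oo)%E (fun j => phi_blk X cl F r (Bbar j)) j).
  move: h; rewrite /phi_blk hwe inver -/(q j).
  have [w0|wn0] := eqVneq (w j) 0.
    rewrite w0 mulr0; have [->|qn0] := eqVneq (q j) 0; first by [].
    rewrite gt0_muley ?lte_fin ?lt0r ?qn0 ?sqnorm_ge0 //.
  have wpos : 0 < w j by rewrite lt0r wn0 hw0.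
  by rewrite -EFinM lee_fin ler_pdivrMr.
have hs j : sqnorm (X *m u j) <= n%:R * mu * sqnorm (u j).
  have [s0|sn0] := eqVneq (sqnorm (u j)) 0.
    by rewrite s0 mulr0 (sqnorm_eq0 _ s0) mulmx0 sqnorm0.
  have ujn0 : u j != 0 by apply: contra sn0 => /eqP ->; rewrite sqnorm0.
  have := hrp j (u j) ujn0 (hu' j); rewrite Me lee_fin /ratio => hr.
  have spos : 0 < sqnorm (u j) by rewrite lt0r sn0 sqnorm_ge0.
  have -> : sqnorm (X *m u j) =
    n%:R * (n%:R^-1 * sqnorm (X *m u j) / sqnorm (u j)) * sqnorm (u j).
    by field; rewrite ?gt_eqF.
  by rewrite ler_wpM2r ?sqnorm_ge0 // ler_wpM2l // ltW.
have haj j : aj j ^+ 2 <= (phi * w j) * sqnorm (X *m u j).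
  apply: le_trans (proj_bound _ _ X _ r _ (hu j)) _.
  by rewrite ler_wpM2r ?sqnorm_ge0 // hq.
have hCS := @sumCS _ b aj (fun j => phi * w j) (fun j => sqnorm (X *m u j))
  (fun j => mulr_ge0 phi0 (hw0 j)) (fun j => sqnorm_ge0 _) haj.
have hss : \sum_j sqnorm (X *m u j) <= n%:R * mu * sqnorm D.
  apply: le_trans (ler_sum _ (fun j _ => hs j)) _.
  rewrite -mulr_sumr ler_wpM2l ?mulr_ge0 ?ler0n ?(ltW mupos) //.
  exact: (decomp_norm _ _ Bbar F D).
have hsw : \sum_j phi * w j <= phi * sig.
  by rewrite -mulr_sumr ler_wpM2l.
have ha2 : a ^+ 2 <= phi * sig * (n%:R * mu * sqnorm D).
  rewrite ha; apply: le_trans hCS _.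
  apply: ler_pM => //; first by apply: sumr_ge0 => j _; apply: mulr_ge0.
  by apply: sumr_ge0 => j _; apply: sqnorm_ge0.
have htD : t * Dl <= a ^+ 2.
  rewrite hDl -subr_ge0.
  have -> : a ^+ 2 - t * (-2 * a - t) = (a + t) ^+ 2 by ring.
  exact: sqr_ge0.
have hDsupp : suppv D \subset F :|: Fb.
  apply/suppvP => k'; rewrite !inE negb_or => /andP[kF kU].
  by rewrite !mxE Sb' // Sbb' // subr0.
have Dn0 : D != 0 by apply: contra (lt0r_neq0 sD) => /eqP ->; rewrite sqnorm0.
have mle : (m <= (ratio D)%:E)%E.
  by apply: ereal_inf_lbound; exists D.
have m0 : (0 <= m)%E.
  apply: le_ereal_inf_tmp => _ [v _ <-]; rewrite lee_fin /ratio.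
  by rewrite divr_ge0 ?mulr_ge0 ?invr_ge0 ?ler0n ?sqnorm_ge0.
have mfin : m \is a fin_num by rewrite ge0_fin_numE // (le_lt_trans mle) ?ltry.
set rho := fine m.
have me : m = rho%:E by rewrite fineK.
have hrho : rho <= ratio D by rewrite -lee_fin -me.
have ms0 : mu * sig != 0 by rewrite mulf_neq0 // gt_eqF // (lt_le_trans ltr01).
have mspos : 0 < mu * sig by rewrite mulr_gt0 // (lt_le_trans ltr01).
rewrite me Me Se -EFinM inver (negbTE ms0) -!EFinM Pe lee_fin.
rewrite mulrAC ler_pdivrMr //.
apply: le_trans (ler_wpM2r (ltW Dlpos) hrho) _.
have -> : ratio D * Dl = n%:R^-1 * (t * Dl) / sqnorm D.
  by rewrite /ratio -/t; ring.
apply: (@le_trans _ _ (n%:R^-1 * (phi * sig * (n%:R * mu * sqnorm D)) / sqnorm D)).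
  rewrite ler_wpM2r ?invr_ge0 ?sqnorm_ge0 // ler_wpM2l ?invr_ge0 ?ler0n //.
  exact: le_trans htD ha2.
rewrite le_eqVlt; apply/orP; left; apply/eqP.
by field; rewrite !gt_eqF.
Qed.
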